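(* As $v\to\infty$, $f'(v)\ge(1+o(1))v^2/12$; consequently, as $t\to\infty$, $f(t)\le(\sqrt{12}+o(1))\sqrt{t}$.
   Context: For $[k]=\{0,\dots,k-1\}$ and $K\ge k$, the addition table of $[k]$ as a subset of $\mathbb{Z}_K$ is the set of triples (faces) $(a,b,a+b\bmod K)$, $a,b\in[k]$, viewed as a tripartite 3-uniform hypergraph whose vertices are rows, columns and labels (three disjoint vertex classes). A set of vertices spans a face if all three vertices of the face are in the set. $f'(v)$ is the maximal number of faces that can be spanned by a set of $v$ vertices in the addition table of $[k]\subset\mathbb{Z}_K$, for any $K\ge k$ with $k$ sufficiently large compared to $v$. An $(r,s)$-configuration is a collection of $s$ faces involving at most $r$ vertices in total. $f(t)$ is the least integer $r$ such that the addition table of $[k]\subset\mathbb{Z}_K$ contains an $(r,t)$-configuration for all $K\ge k$ with $k$ sufficiently large compared to $t$. *)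

(* Defs.v *)
From HB Require Import structures.
From mathcomp Require Import all_boot all_order all_algebra.
From mathcomp Require Import boolp reals.
Set Implicit Arguments. Unset Strict Implicit. Unset Printing Implicit Defensive.

(* Addition table of [k] = {0,...,k-1} inside Z_K (K >= k).
   Faces: (a, b, (a+b) mod K) with a b : 'I_k.  A face is determined by
   its row a and column b; its label is [lab K a b].
   Vertices: rows ('I_k), columns ('I_k), labels ('I_K), three disjoint
   classes.  A vertex set is a triple (A, B, C). *)

Definition lab (K a b : nat) : nat := (a + b) %% K.

Definition spanned (k K : nat) (A B : {set 'I_k}) (C : {set 'I_K}) : nat :=
  #|[set p : 'I_k * 'I_k | [&& p.1 \in A, p.2 \in B &
       [exists c in C, val c == lab K p.1 p.2]]]|.

Definition nverts (k K : nat) (F : {set 'I_k * 'I_k}) : nat :=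
  #|[set p.1 | p in F]| + #|[set p.2 | p in F]|
  + #|[set c : 'I_K | [exists p in F, val c == lab K p.1 p.2]]|.

Definition fprime_at_least (v s : nat) : Prop :=
  exists k0, forall k K, (k0 <= k)%N -> (k <= K)%N ->
    exists (A B : {set 'I_k}) (C : {set 'I_K}),
      #|A| + #|B| + #|C| = v /\ (s <= spanned A B C)%N.

(* f'(v): the maximal such s.  Since a set of v vertices spans at most
   v*v faces, the maximum can be taken over s <= v*v. *)
Definition fprime (v : nat) : nat :=
  \max_(s < (v * v).+1 | `[< fprime_at_least v s >]) s.

Definition has_config (t r : nat) : Prop :=
  exists k0, forall k K, (k0 <= k)%N -> (k <= K)%N ->
    exists F : {set 'I_k * 'I_k}, #|F| = t /\ (nverts K F <= r)%N.

(* f(t): the least such r.  There is always a (3t, t)-configuration, so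
   the minimum is over r <= 3t (with default 3t). *)
Definition f (t : nat) : nat :=
  \big[minn/(3 * t)]_(r < (3 * t).+1 | `[< has_config t r >]) r.

(* Main.v *)
Require Import Defs.
From HB Require Import structures.
From mathcomp Require Import all_boot all_order all_algebra.
From mathcomp Require Import boolp reals zify ring lra.

Lemma cnt n a c lo hi : \sum_(0 <= b < n) (((b < c) && (lo <= a + b) && (a + b < hi)) : nat)
  = minn (minn n c) (hi - a) - minn (minn n c) (lo - a).
Proof.
elim: n => [|n IH]; first by rewrite big_geq //; lia.
rewrite big_nat_recr //= IH.
case: (ltnP n c) => h1; case: (leqP lo (a+n)) => h2; case: (ltnP (a+n) hi) => h3 /=; lia.
Qed.

Definition row m a := minn (2 * m) (3 * m - a) - minn (2 * m) (m - a).

Lemma P1 m n : n <= m -> 2 * \sum_(0 <= a < n) row m a + n = 2 * n * m + n * n.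
Proof.
elim: n => [|n IH] h; first by rewrite big_geq.
rewrite big_nat_recr //= mulnDr.
have -> : row m n = m + n by rewrite /row; lia.
have := IH (ltnW h). nia.
Qed.

Lemma P2 m j : j <= m -> 2 * \sum_(0 <= a < m + j) row m a + m + j * j = 3 * m * m + 4 * m * j + j.
Proof.
elim: j => [|j IH] h; first by rewrite addn0; have := @P1 m m (leqnn m); nia.
rewrite addnS big_nat_recr /=; last lia.
have -> : row m (m+j) = 2 * m - j by rewrite /row; lia.
have := IH (ltnW h). nia.
Qed.

Lemma rowsum m : \sum_(0 <= a < 2 * m) row m a = 3 * m * m.
Proof. have := @P2 m m (leqnn m). have -> : m + m = 2 * m by lia. nia. Qed.

Definition Rg n lo hi := [set i : 'I_n | (lo <= i) && (i < hi)].

Lemma sum_ord_nat k (P : nat -> bool) :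
  \sum_(i : 'I_k) (P i : nat) = \sum_(0 <= i < k) (P i : nat).
Proof. by rewrite big_mkord. Qed.

Lemma card_Rg n lo hi : hi <= n -> #|Rg n lo hi| = hi - lo.
Proof.
move=> h; rewrite /Rg -sum1dep_card big_mkcond /=.
transitivity (\sum_(i : 'I_n) (((lo <= i) && (i < hi)) : nat)).
  by apply: eq_bigr => i _; case: ifP.
rewrite (sum_ord_nat n (fun i => (lo <= i) && (i < hi))).
transitivity (\sum_(0 <= b < n) (((b < n) && (lo <= 0 + b) && (0 + b < hi)) : nat)).
  by apply: eq_big_nat => i /andP[_ ->].
rewrite cnt; lia.
Qed.

Lemma ex_lab K x lo hi : x < K ->
  [exists c in Rg K lo hi, val c == x] = (lo <= x) && (x < hi).
Proof.
move=> xK; apply/existsP/idP.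
  by case=> c /andP[]; rewrite inE => Hc /eqP <-.
by move=> H; exists (Ordinal xK); rewrite inE /= H eqxx.
Qed.

Lemma span_eq m k K : 4 * m <= k -> k <= K ->
  spanned (Rg k 0 (2 * m)) (Rg k 0 (2 * m)) (Rg K m (3 * m)) = 3 * m * m.
Proof.
move=> hk hK.
rewrite /spanned -sum1dep_card big_mkcond /=.
rewrite -(pair_big xpredT xpredT (fun a b => if [&& a \in Rg k 0 (2 * m), b \in Rg k 0 (2 * m)
       & [exists c in Rg K m (3 * m), val c == lab K a b]] then 1 else 0)) /=.
transitivity (\sum_(a : 'I_k) (if a < 2 * m then row m a else 0)).
  apply: eq_bigr => a _.
  case: (ltnP a (2 * m)) => ha.
    transitivity (\sum_(b : 'I_k) (((b < 2 * m) && (m <= a + b) && (a + b < 3 * m)) : nat)).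
      apply: eq_bigr => b _; rewrite !inE /= ha.
      case: (ltnP b (2 * m)) => hb /=; last by [].
      rewrite /lab modn_small; last lia.
      by rewrite ex_lab; [case: ifP => /andP | lia].
    rewrite (sum_ord_nat k (fun b => (b < 2 * m) && (m <= a + b) && (a + b < 3 * m))).
    rewrite cnt /row; lia.
  by apply: big1 => b _; rewrite !inE /= ltnNge ha.
rewrite -(big_mkord xpredT (fun a => if a < 2 * m then row m a else 0)).
rewrite (@big_cat_nat _ _ _ (2 * m)) /=; [|lia|lia].
rewrite [X in _ + X]big1_seq ?addn0; last first.
  move=> i /andP[_]; rewrite mem_index_iota => /andP[h1 _]; by rewrite ltnNge h1.
rewrite -rowsum; apply: eq_big_nat => i /andP[_ ->] //.
Qed.

Lemma spanned_monoC k K (A B : {set 'I_k}) (C C' : {set 'I_K}) :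
  C \subset C' -> spanned A B C <= spanned A B C'.
Proof.
move=> sC; apply: subset_leq_card; apply/subsetP => p; rewrite !inE.
case/and3P => -> -> /existsP[c /andP[cC e]] /=.
by apply/existsP; exists c; rewrite (subsetP sC).
Qed.

Lemma fpal v : fprime_at_least v (3 * (v %/ 6) * (v %/ 6)).
Proof.
set m := v %/ 6. have hv := divn_eq v 6. have hr := ltn_pmod v (isT : 0 < 6).
exists v => k K hk hK.
exists (Rg k 0 (2 * m)), (Rg k 0 (2 * m)), (Rg K m (3 * m + v %% 6)).
rewrite !card_Rg; try lia; split; first lia.
rewrite -(@span_eq m k K); [|lia|lia].
apply: spanned_monoC; apply/subsetP => c; rewrite !inE => /andP[-> h] /=; lia.
Qed.

Lemma fprime_ge v : 3 * (v %/ 6) * (v %/ 6) <= fprime v.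
Proof.
have hv := divn_eq v 6.
have h : 3 * (v %/ 6) * (v %/ 6) < (v * v).+1 by nia.
rewrite /fprime.
exact: (@leq_bigmax_cond _ (fun s : 'I_(v * v).+1 => `[< fprime_at_least v s >]) (fun s => nat_of_ord s) (Ordinal h) (asboolT (fpal v))).
Qed.

Lemma nverts_le k K (A B : {set 'I_k}) (C : {set 'I_K}) (F : {set 'I_k * 'I_k}) :
  F \subset [set p : 'I_k * 'I_k | [&& p.1 \in A, p.2 \in B &
       [exists c in C, val c == lab K p.1 p.2]]] ->
  nverts K F <= #|A| + #|B| + #|C|.
Proof.
move=> sF; rewrite /nverts; apply: leq_add; first apply: leq_add.
- apply: subset_leq_card; apply/subsetP => x /imsetP[p pF ->].
  by have := subsetP sF p pF; rewrite inE => /and3P[].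
- apply: subset_leq_card; apply/subsetP => x /imsetP[p pF ->].
  by have := subsetP sF p pF; rewrite inE => /and3P[].
- apply: subset_leq_card; apply/subsetP => x; rewrite inE => /existsP[p /andP[pF /eqP e]].
  have := subsetP sF p pF; rewrite inE => /and3P[_ _ /existsP[c /andP[cC /eqP e']]].
  by have -> : x = c by apply: val_inj; rewrite e e'.
Qed.

Lemma has_config_m t m : t <= 3 * m * m -> has_config t (6 * m).
Proof.
move=> ht; exists (4 * m) => k K hk hK.
set S := [set p : 'I_k * 'I_k | [&& p.1 \in Rg k 0 (2 * m), p.2 \in Rg k 0 (2 * m) &
       [exists c in Rg K m (3 * m), val c == lab K p.1 p.2]]].
have cS : #|S| = 3 * m * m by rewrite -(@span_eq m k K).
have : t <= #|S| by rewrite cS.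
case/card_geqP => s [us ss sub].
exists [set x in s]; split; first by rewrite cardsE (card_uniqP us).
have sF : [set x in s] \subset S by apply/subsetP => x; rewrite inE => /sub.
apply: leq_trans (@nverts_le _ _ _ _ _ _ sF) _.
by rewrite !card_Rg; lia.
Qed.

Lemma bigmin_le n x (P : pred 'I_n) (F : 'I_n -> nat) : \big[minn/x]_(i | P i) F i <= x.
Proof. by elim/big_rec: _ => // i y _ hy; rewrite geq_min hy orbT. Qed.

Lemma bigmin_le_seq (I : eqType) (r : seq I) x (P : pred I) (F : I -> nat) i0 :
  i0 \in r -> P i0 -> \big[minn/x]_(i <- r | P i) F i <= F i0.
Proof.
elim: r => // a r IH; rewrite in_cons big_cons => /orP[/eqP -> ->|/IH H /H {}H].
  by rewrite geq_minl.
by case: ifP => // _; rewrite geq_min H orbT.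
Qed.

Lemma f_le t m : t <= 3 * m * m -> f t <= 6 * m.
Proof.
move=> ht; rewrite /f.
case: (leqP (6 * m) (3 * t)) => h6; last first.
  by apply: leq_trans (bigmin_le _ _ _ _) _; apply: ltnW.
have h : 6 * m < (3 * t).+1 by [].
apply: (@bigmin_le_seq _ _ _ _ _ (Ordinal h)); [exact: mem_index_enum | apply/asboolP; exact: has_config_m].
Qed.
Import Order.TTheory GRing.Theory Num.Theory.
Local Open Scope ring_scope.

Lemma part1 (R : realType) :
  (forall eps : R, 0 < eps -> exists v0 : nat, forall v : nat, (v0 <= v)%N ->
      (1 - eps) * ((v%:R : R) ^+ 2 / 12) <= (fprime v)%:R).
Proof.
move=> eps eps0.
set N := (Num.truncn (eps^-1)).+1.
have hN : eps^-1 < N%:R by exact: truncnS_gt.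
have eN : 1 < eps * N%:R.
  by have := ltr_pM2l eps0 (eps^-1) (N%:R); rewrite mulfV ?(lt0r_neq0 eps0) // hN.
exists (6 * (3 * N + 1))%N => v hv.
set m := (v %/ 6)%N.
have hv6 := divn_eq v 6. have hr := ltn_pmod v (isT : (0 < 6)%N).
have h1 : (6 * m <= v)%N by lia.
have h2 : (v <= 6 * m + 5)%N by lia.
have h3 : (3 * N + 1 <= m)%N by lia.
have hf := fprime_ge v.
have hf' : 3 * (m%:R : R) ^+ 2 <= (fprime v)%:R.
  by rewrite (_ : 3 * _ = ((3 * m * m)%N)%:R) ?ler_nat // !natrM expr2 mulrA.
apply: le_trans hf'.
have w1 : (v%:R : R) <= 6 * m%:R + 5.
  by have := h2; rewrite -(ler_nat R) natrD natrM.
have x1 : 3 * (N%:R : R) + 1 <= m%:R.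
  by have := h3; rewrite -(ler_nat R) natrD natrM.
have w0 : 0 <= (v%:R : R) by [].
have n0 : 0 <= (N%:R : R) by [].
have ex : 3 <= eps * m%:R by nra.
have x0 : 1 <= (m%:R : R) by nra.
have sq : (v%:R : R) ^+ 2 <= (6 * m%:R + 5) ^+ 2.
  by rewrite !expr2; nra.
case: (leP 1 eps) => he.
  have : 0 <= (v%:R : R) ^+ 2 by rewrite expr2; nra.
  nra.
have : (1 - eps) * (v%:R : R) ^+ 2 <= (1 - eps) * (6 * m%:R + 5) ^+ 2 by nra.
have : 36 * eps * (m%:R : R) ^+ 2 >= 108 * m%:R by rewrite expr2; nra.
rewrite !expr2; nra.
Qed.

Lemma part2 (R : realType) :
  (forall eps : R, 0 < eps -> exists t0 : nat, forall t : nat, (t0 <= t)%N ->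
      (f t)%:R <= (Num.sqrt (12 : R) + eps) * Num.sqrt (t%:R : R)).
Proof.
move=> eps eps0.
set N := (Num.truncn (6 / eps)).+1.
have hN : 6 / eps < N%:R by exact: truncnS_gt.
have eN : 6 < eps * N%:R.
  by have := ltr_pM2l eps0 (6 / eps) (N%:R); rewrite mulrC -mulrA mulVf ?(lt0r_neq0 eps0) // mulr1 hN.
exists (N * N)%N => t ht.
set y := Num.sqrt (t%:R : R).
set s := Num.sqrt (12 : R).
have y0 : 0 <= y by exact: sqrtr_ge0.
have s0 : 0 <= s by exact: sqrtr_ge0.
have yy : y ^+ 2 = t%:R by rewrite sqr_sqrtr.
have ss : s ^+ 2 = 12 by rewrite sqr_sqrtr.
have yN : (N%:R : R) <= y.
  rewrite -[N%:R]ger0_norm // -sqrtr_sqr ler_sqrt // expr2 -natrM ler_nat //.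
set u := s * y / 6.
have u0 : 0 <= u by rewrite /u; apply: divr_ge0 => //; exact: mulr_ge0.
set m := (Num.truncn u).+1.
have um : u < m%:R by exact: truncnS_gt.
have mu : m%:R <= u + 1 by rewrite /m -natr1 lerD2r truncn_le.
have uu : 3 * u ^+ 2 = t%:R.
  rewrite /u -yy (_ : 3 * (s * y / 6) ^+ 2 = s ^+ 2 * y ^+ 2 / 12); last by rewrite !expr2; field.
  by rewrite ss; field.
have htm : (t <= 3 * m * m)%N.
  rewrite -(ler_nat R) !natrM -uu.
  have : u * u <= m%:R * m%:R by nra.
  rewrite expr2; nra.
have hf := @f_le t m htm.
have hf' : (f t)%:R <= 6 * (m%:R : R).
  by rewrite (_ : 6 * _ = (6 * m)%N%:R) ?ler_nat // natrM.
apply: le_trans hf' _.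
have : 6 <= eps * y by nra.
rewrite /u in mu.
have : 6 * m%:R <= s * y + 6 by lra.
nra.
Qed.

Theorem proposition1 (R : realType) :
  (forall eps : R, 0 < eps -> exists v0 : nat, forall v : nat, (v0 <= v)%N ->
      (1 - eps) * ((v%:R : R) ^+ 2 / 12) <= (fprime v)%:R)
  /\
  (forall eps : R, 0 < eps -> exists t0 : nat, forall t : nat, (t0 <= t)%N ->
      (f t)%:R <= (Num.sqrt (12 : R) + eps) * Num.sqrt (t%:R : R)).
Proof. split; [exact: part1 | exact: part2]. Qed.
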